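(* Consider a commutative diagram of abelian groups with exact rows $\mathcal{E}_1: 0\to A_1\xrightarrow{\iota_1}G_1\xrightarrow{\pi_1}B_1\to 0$, $\mathcal{E}_2: 0\to A_2\xrightarrow{\iota_2}G_2\xrightarrow{\pi_2}B_2\to 0$, with vertical homomorphisms $\alpha:A_1\to A_2$, $\gamma:G_1\to G_2$, $\beta:B_1\to B_2$ (so $\gamma\circ\iota_1=\iota_2\circ\alpha$ and $\pi_2\circ\gamma=\beta\circ\pi_1$), where $A_i,B_i$ are first countable abelian topological groups and $\alpha,\beta$ are continuous. For $i=1,2$ let $s_i$ be a topologizing section of $\pi_i$ and endow $G_i$ with the topology $\tau_{\mathcal{E}_i,s_i}$. If $s_1$ and $s_2$ are compatible, then $\gamma$ is continuous.
   Context: Topological groups are not assumed Hausdorff. Given an exact sequence of abelian groups $\mathcal{E}:0\to A\xrightarrow{\iota}G\xrightarrow{\pi}B\to 0$ with $A,B$ abelian topological groups and a set-theoretic section $s:B\to G$ of $\pi$ with $s(0_B)=0_G$, put $h_s(b,b')=\iota^{-1}(s(b)+s(b')-s(b+b'))$ and define the group law $(a,b)+_s(a',b')=(a+a'+h_s(b,b'),b+b')$ on $A\times B$; then $\theta_s:(A\times B,+_s)\to G$, $(a,b)\mapsto\iota(a)+s(b)$, is a group isomorphism. Let $\tau_{A,B}$ be the topology on $(A\times B,+_s)$ whose basic open sets are the $+_s$-translates of products $U\times V$ with $U$ an open neighborhood of $0_A$ and $V$ an open neighborhood of $0_B$ (so these products form a neighborhood basis of $(0_A,0_B)$). The section $s$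 is called a topologizing section if $(A\times B,+_s,\tau_{A,B})$ is a topological group; then $\tau_{\mathcal{E},s}$ denotes the topology on $G$ transported from $\tau_{A,B}$ via $\theta_s$. In the setting of the diagram above, with sections $s_i$ of $\pi_i$ satisfying $s_i(0)=0$, define $\sigma_{s_1,s_2}:B_1\to A_2$, $\sigma_{s_1,s_2}(b)=\iota_2^{-1}(\gamma(s_1(b))-s_2(\beta(b)))$ (well-defined by commutativity). The sections $s_1,s_2$ are called compatible if $\sigma_{s_1,s_2}$ is continuous at $0_{B_1}$. *)

(* Defs.v *)
From HB Require Import structures.
From mathcomp Require Import all_boot all_algebra.
From mathcomp Require Import classical_sets boolp topology tvs.
Set Implicit Arguments. Unset Strict Implicit. Unset Printing Implicit Defensive.
Import GRing.Theory.
Local Open Scope classical_set_scope.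
Local Open Scope ring_scope.

Definition first_countable (T : topologicalType) : Prop :=
  forall x : T, exists N : nat -> set T,
    (forall n, nbhs x (N n)) /\ (forall U, nbhs x U -> exists n, N n `<=` U).

Definition short_exact (A G B : zmodType) (iota : A -> G) (pi : G -> B) : Prop :=
  [/\ injective iota, (forall b, exists g, pi g = b)
    & (forall g, pi g = 0 <-> exists a, iota a = g)].

Definition zero_section (G B : zmodType) (pi : G -> B) (s : B -> G) : Prop :=
  (forall b, pi (s b) = b) /\ s 0 = 0.

(* iota^{-1} (on the image of iota; arbitrary (0) outside). *)
Definition inv_on (A G : zmodType) (iota : A -> G) (g : G) : A :=
  xget 0 [set a | iota a = g].

Definition hs (A G B : zmodType) (iota : A -> G) (s : B -> G) (b b' : B) : A :=
  inv_on iota (s b + s b' - s (b + b')).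

Definition addS (A G B : zmodType) (iota : A -> G) (s : B -> G)
    (p q : A * B) : A * B :=
  (p.1 + q.1 + hs iota s p.2 q.2, p.2 + q.2).

Definition oppS (A G B : zmodType) (iota : A -> G) (s : B -> G)
    (p : A * B) : A * B :=
  (- p.1 - hs iota s p.2 (- p.2), - p.2).

Definition thetaS (A G B : zmodType) (iota : A -> G) (s : B -> G)
    (p : A * B) : G := iota p.1 + s p.2.

Definition basicS (A G B : zmodType) (iota : A -> G) (s : B -> G)
    (q : A * B) (U : set A) (V : set B) : set (A * B) :=
  [set p | exists u v, [/\ U u, V v & p = addS iota s q (u, v)]].

(* open sets of tau_{A,B}: unions of basic open sets
   q +_s (U x V), U (resp. V) an open neighbourhood of 0_A (resp. 0_B). *)
Definition tauS_open (A B : topologicalZmodType) (G : zmodType)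
    (iota : A -> G) (s : B -> G) (O : set (A * B)) : Prop :=
  forall p, O p -> exists q (U : set A) (V : set B),
    [/\ open U, U 0, open V, V 0
      & basicS iota s q U V p /\ basicS iota s q U V `<=` O].

(* s is topologizing: tau_{A,B} is a topology (closed under finite
   intersections; arbitrary unions, empty set and whole space are automatic)
   and (A x B, +_s, tau_{A,B}) is a topological group (+_s jointly continuous,
   inversion continuous). *)
Definition topologizing (A B : topologicalZmodType) (G : zmodType)
    (iota : A -> G) (s : B -> G) : Prop :=
  [/\ (forall O1 O2, tauS_open iota s O1 -> tauS_open iota s O2 ->
          tauS_open iota s (O1 `&` O2)),
      (forall p q W, tauS_open iota s W -> W (addS iota s p q) ->
          exists W1 W2, [/\ tauS_open iota s W1, W1 p, tauS_open iota s W2, W2 q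
            & forall p' q', W1 p' -> W2 q' -> W (addS iota s p' q')])
    & (forall p W, tauS_open iota s W -> W (oppS iota s p) ->
          exists W1, [/\ tauS_open iota s W1, W1 p
            & forall p', W1 p' -> W (oppS iota s p')])].

Definition tauG_open (A B : topologicalZmodType) (G : zmodType)
    (iota : A -> G) (s : B -> G) (W : set G) : Prop :=
  tauS_open iota s (thetaS iota s @^-1` W).

Definition sigmaS (A2 : zmodType) (B1 B2 : zmodType) (G1 G2 : zmodType)
    (iota2 : A2 -> G2) (gamma : G1 -> G2) (beta : B1 -> B2)
    (s1 : B1 -> G1) (s2 : B2 -> G2) (b : B1) : A2 :=
  inv_on iota2 (gamma (s1 b) - s2 (beta b)).

Definition compatible (A2 B1 : topologicalZmodType) (B2 G1 G2 : zmodType)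
    (iota2 : A2 -> G2) (gamma : G1 -> G2) (beta : B1 -> B2)
    (s1 : B1 -> G1) (s2 : B2 -> G2) : Prop :=
  {for 0, continuous (sigmaS iota2 gamma beta s1 s2)}.

(* Main.v *)
Require Import Defs.
From HB Require Import structures.
From mathcomp Require Import all_boot all_algebra.
From mathcomp Require Import classical_sets boolp topology tvs.
Set Warnings "-notation-overridden,-ambiguous-paths".
Set Implicit Arguments. Unset Strict Implicit.
Import GRing.Theory.
Local Open Scope classical_set_scope.
Local Open Scope ring_scope.

Lemma inv_onP (A G : zmodType) (iota : A -> G) g :
  (exists a, iota a = g) -> iota (inv_on iota g) = g.
Proof. by move=> h; rewrite /inv_on; apply: (@xgetPex _ 0 [set a | iota a = g]). Qed.

Lemma hsP (A G B : zmodType) (iota : {additive A -> G}) (pi : {additive G -> B})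
  (s : B -> G) : short_exact iota pi -> zero_section pi s ->
  forall b b', iota (hs iota s b b') = s b + s b' - s (b + b').
Proof.
move=> [_ _ ex] [sK _] b b'; apply: inv_onP; apply/ex.
by rewrite !raddfB !raddfD /= !sK subrr.
Qed.

Lemma theta_add (A G B : zmodType) (iota : {additive A -> G}) (pi : {additive G -> B})
  (s : B -> G) : short_exact iota pi -> zero_section pi s ->
  forall p q, thetaS iota s (addS iota s p q) = thetaS iota s p + thetaS iota s q.
Proof.
move=> e z p q; rewrite /thetaS /addS /= !raddfD /= (hsP e z).
by rewrite addrA subrK addrACA.

Qed.

Lemma theta_opp (A G B : zmodType) (iota : {additive A -> G}) (pi : {additive G -> B})
  (s : B -> G) : short_exact iota pi -> zero_section pi s ->
  forall p, thetaS iota s (oppS iota s p) = - thetaS iota s p.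
Proof.
move=> e z p; rewrite /thetaS /oppS /= !raddfB /= (hsP e z) raddfN subrr z.2 subr0.
by rewrite opprD addrA subrK opprD.
Qed.

Lemma theta_inj (A G B : zmodType) (iota : {additive A -> G}) (pi : {additive G -> B})
  (s : B -> G) : short_exact iota pi -> zero_section pi s ->
  injective (thetaS iota s).
Proof.
move=> [ii _ ex] [sK _] [a b] [a' b']; rewrite /thetaS /= => h.
have pi0 : forall x, pi (iota x) = 0 by move=> x; apply/ex; exists x.
have hb : b = b' by move: (congr1 pi h); rewrite !raddfD /= !pi0 !add0r !sK.
subst b'; move/addIr: h => /ii ->; done.
Qed.

Lemma theta0 (A G B : zmodType) (iota : {additive A -> G}) (pi : {additive G -> B})
  (s : B -> G) : zero_section pi s -> thetaS iota s (0, 0) = 0.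
Proof. by move=> z; rewrite /thetaS /= raddf0 z.2 addr0. Qed.
Lemma addS0 (A G B : zmodType) (iota : {additive A -> G}) (pi : {additive G -> B})
  (s : B -> G) : short_exact iota pi -> zero_section pi s ->
  forall p, addS iota s p (0, 0) = p.
Proof. by move=> e z p; apply: (theta_inj e z); rewrite (theta_add e z) (theta0 _ z) addr0. Qed.

Lemma add0S (A G B : zmodType) (iota : {additive A -> G}) (pi : {additive G -> B})
  (s : B -> G) : short_exact iota pi -> zero_section pi s ->
  forall p, addS iota s (0, 0) p = p.
Proof. by move=> e z p; apply: (theta_inj e z); rewrite (theta_add e z) (theta0 _ z) add0r. Qed.

Lemma centering (A B : topologicalZmodType) (G : zmodType)
  (iota : {additive A -> G}) (pi : {additive G -> B}) (s : B -> G) :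
  short_exact iota pi -> zero_section pi s -> topologizing iota s ->
  forall W, tauS_open iota s W -> W (0, 0) ->
  exists (U : set A) (V : set B), [/\ open U, U 0, open V, V 0
     & basicS iota s (0, 0) U V `<=` W].
Proof.
move=> e z [Hint Hadd Hopp] W oW W0.
have [W1 [W2 [o1 w1 o2 w2 H12]]] := Hadd (0, 0) (0, 0) W oW
  ltac:(by rewrite (addS0 e z)).
have op0 : oppS iota s (0, 0) = (0, 0).
  by apply: (theta_inj e z); rewrite (theta_opp e z) (theta0 _ z) oppr0.
have [W3 [o3 w3 H3]] := Hopp (0, 0) W2 o2 ltac:(by rewrite op0).
have [r [U [V [oU U0 oV V0 [[u [v [Uu Vv e0]]] sub]]]]] :=
  Hint W1 W3 o1 o3 (0, 0) (conj w1 w3).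
exists U, V; split => // x [x1 [x2 [Ux1 Vx2 ->]]].
have h1 : W1 (addS iota s r (x1, x2)) by apply: (sub _ _).1; exists x1, x2.
have h3 : W3 r by apply: (sub _ _).2; exists 0, 0; rewrite (addS0 e z).
have := H12 _ _ h1 (H3 _ h3).
congr W; apply: (theta_inj e z).
rewrite !(theta_add e z) (theta_opp e z) (theta0 _ z) add0r.
by rewrite addrAC subrr add0r.
Qed.

Theorem proposition3p2
  (A1 B1 A2 B2 : topologicalZmodType) (G1 G2 : zmodType)
  (iota1 : {additive A1 -> G1}) (pi1 : {additive G1 -> B1})
  (iota2 : {additive A2 -> G2}) (pi2 : {additive G2 -> B2})
  (alpha : {additive A1 -> A2}) (gamma : {additive G1 -> G2})
  (beta : {additive B1 -> B2})
  (s1 : B1 -> G1) (s2 : B2 -> G2) :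
  short_exact iota1 pi1 -> short_exact iota2 pi2 ->
  (forall a, gamma (iota1 a) = iota2 (alpha a)) ->
  (forall g, pi2 (gamma g) = beta (pi1 g)) ->
  first_countable A1 -> first_countable B1 ->
  first_countable A2 -> first_countable B2 ->
  continuous alpha -> continuous beta ->
  zero_section pi1 s1 -> zero_section pi2 s2 ->
  topologizing iota1 s1 -> topologizing iota2 s2 ->
  compatible iota2 gamma beta s1 s2 ->
  forall W : set G2, tauG_open iota2 s2 W ->
    tauG_open iota1 s1 (gamma @^-1` W).
Proof.
move=> e1 e2 gi pg _ _ _ _ ca cb z1 z2 t1 t2 cs W oW.
set sig := sigmaS iota2 gamma beta s1 s2.
have sigP b : iota2 (sig b) = gamma (s1 b) - s2 (beta b).
  apply: inv_onP; case: e2 => _ _ ex; apply/ex.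
  by rewrite raddfB /= pg z1.1 z2.1 subrr.
have sig0 : sig 0 = 0.
  have [ii _ _] := e2; apply: ii; by rewrite sigP z1.2 !raddf0 z2.2 subrr.
pose Ga (p : A1 * B1) : A2 * B2 := (alpha p.1 + sig p.2, beta p.2).
have thG p : thetaS iota2 s2 (Ga p) = gamma (thetaS iota1 s1 p).
  rewrite /thetaS /Ga /= raddfD /= sigP raddfD /= gi.
  by rewrite -addrA subrK.
have GaD p q : Ga (addS iota1 s1 p q) = addS iota2 s2 (Ga p) (Ga q).
  apply: (theta_inj e2 z2); rewrite thG (theta_add e2 z2) !thG.
  by rewrite (theta_add e1 z1) raddfD.
move=> p /= Hp.
case: t2 => Hint2 Hadd2 Hopp2.
have [W1 [W2 [o1 w1 o2 w2 H12]]] := Hadd2 (Ga p) (0, 0) _ oW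
  ltac:(by rewrite (addS0 e2 z2) /= thG).
have [U' [V' [oU' U'0 oV' V'0 sub']]] := centering e2 z2 (And3 Hint2 Hadd2 Hopp2) o2 w2.
have : nbhs ((0:A2, 0:A2).1 + (0:A2, 0:A2).2) U'.
  by apply: open_nbhs_nbhs; split => //=; rewrite addr0.
move/(add_continuous (0, 0)) => -[[Q1 Q2] /= [nQ1 nQ2] sQ].
have na : nbhs (0 : A1) (alpha @^-1` Q1).
  by apply: (ca 0); rewrite raddf0.
have ns : nbhs (0 : B1) (sig @^-1` Q2).
  by apply: cs; move: nQ2; rewrite -sig0.
have nb : nbhs (0 : B1) (beta @^-1` V').
  by apply: (cb 0); rewrite raddf0; exact: open_nbhs_nbhs.
move: na; rewrite nbhsE => -[U [oU U0] sU].
have nsb : nbhs (0:B1) (sig @^-1` Q2 `&` beta @^-1` V') by apply: filterI.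
move: nsb; rewrite nbhsE => -[V [oV V0] sV].
exists p, U, V; split => //; split.
  by exists 0, 0; split => //; rewrite (addS0 e1 z1).
move=> x [x1 [x2 [Ux1 Vx2 ->]]] /=.
rewrite -thG GaD.
apply: H12 => //.
apply: sub'; exists (alpha x1 + sig x2), (beta x2); split.
- move: (sV _ Vx2) => /= [h1 _].
  by apply: (sQ (alpha x1, sig x2)); split; [exact: sU | exact: h1].
- by move: (sV _ Vx2) => /= [_ h2].
- by rewrite (add0S e2 z2).
Qed.
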